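(* Suppose A1–A4 hold and let $\{x_k\}$ be generated by Algorithm 1. Let $\epsilon>0$ and let $T_0(\epsilon)$ be a nonnegative integer such that $\frac{1}{T}\sum_{k=0}^{T-1}\nu_k\le \frac{\kappa_c\epsilon^2}{2}$ for every integer $T\ge T_0(\epsilon)$ (such an integer exists by A4). If $T$ is a positive integer with $$T\ge\max\left\{T_0(\epsilon),\ \frac{2(f(x_0)-f_{low})}{\kappa_c\epsilon^2}\right\},$$ then $\min_{k=0,\dots,T-1}\|\nabla f(x_k)\|\le\epsilon$.
   Context: Let $(X,\langle\cdot,\cdot\rangle)$ be a real Hilbert space with induced norm $\|\cdot\|$, and $f:X\to\mathbb{R}$ Fréchet differentiable with gradient $\nabla f$. Algorithm 1 (general non-monotone descent algorithm): parameters $x_0\in X$, $\alpha_0>0$, $\beta,\rho\in(0,1)$. For $k=0,1,2,\dots$: choose $d_k\in X$ with $\langle\nabla f(x_k),d_k\rangle<0$; then for $l=0,1,2,\dots$ choose a number $\nu_{k,l}\ge 0$ and test $$f(x_k+\alpha_k\beta^l d_k)\le f(x_k)+\rho\alpha_k\beta^l\langle\nabla f(x_k),d_k\rangle+\nu_{k,l};$$ let $l_k$ be the first $l$ for which this holds, set $\nu_k:=\nu_{k,l_k}$, $x_{k+1}=x_k+\alpha_k\beta^{l_k}d_k$ and $\alpha_{k+1}=\alpha_k\beta^{l_k-1}$. It is assumed the algorithm generates infinite sequences (all $l_k$ finite). Assumptions: A1: $\nabla f$ is Lipschitz continuous with constant $L>0$. A2: there is $f_{low}\in\mathbb{R}$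 with $f(x)\ge f_{low}$ for all $x\in X$. A3: there are constants $c_1,c_2>0$ with $\langle\nabla f(x_k),d_k\rangle\le -c_1\|\nabla f(x_k)\|^2$ and $\|d_k\|\le c_2\|\nabla f(x_k)\|$ for all $k$. A4: $\lim_{T\to\infty}\frac1T\sum_{k=0}^{T-1}\nu_k=0$. Constant: $\kappa_c=\min\left\{\rho\beta\alpha_0c_1,\ \frac{2\beta\rho(1-\rho)c_1^2}{Lc_2^2}\right\}$. *)

(* Defs.v *)
From Stdlib Require Import Reals Lra.
Open Scope R_scope.

Record Hilbert := {
  carrier :> Type;
  vzero : carrier;
  vadd : carrier -> carrier -> carrier;
  vopp : carrier -> carrier;
  vscal : R -> carrier -> carrier;
  inner : carrier -> carrier -> R;
  vadd_assoc : forall u v w, vadd u (vadd v w) = vadd (vadd u v) w;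
  vadd_comm : forall u v, vadd u v = vadd v u;
  vadd_0 : forall u, vadd u vzero = u;
  vadd_opp : forall u, vadd u (vopp u) = vzero;
  vscal_assoc : forall a b u, vscal a (vscal b u) = vscal (a * b) u;
  vscal_1 : forall u, vscal 1 u = u;
  vscal_distr_v : forall a u v, vscal a (vadd u v) = vadd (vscal a u) (vscal a v);
  vscal_distr_s : forall a b u, vscal (a + b) u = vadd (vscal a u) (vscal b u);
  inner_sym : forall u v, inner u v = inner v u;
  inner_add_l : forall u v w, inner (vadd u v) w = inner u w + inner v w;
  inner_scal_l : forall a u v, inner (vscal a u) v = a * inner u v;
  inner_pos : forall u, 0 <= inner u u;
  inner_def : forall u, inner u u = 0 -> u = vzero;
  complete : forall s : nat -> carrier,
    (forall e, e > 0 -> exists N, forall n m, (n >= N)%nat -> (m >= N)%nat ->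
        sqrt (inner (vadd (s n) (vopp (s m))) (vadd (s n) (vopp (s m)))) < e) ->
    exists l, forall e, e > 0 -> exists N, forall n, (n >= N)%nat ->
        sqrt (inner (vadd (s n) (vopp l)) (vadd (s n) (vopp l))) < e
}.

Arguments vzero {h}. Arguments vadd {h}. Arguments vopp {h}.
Arguments vscal {h}. Arguments inner {h}.

Definition vnorm {X : Hilbert} (u : X) : R := sqrt (inner u u).
Definition vsub {X : Hilbert} (u v : X) : X := vadd u (vopp v).

Definition frechet_gradient {X : Hilbert} (f : X -> R) (g : X -> X) : Prop :=
  forall x : X, forall e, e > 0 -> exists delta, delta > 0 /\
    forall h : X, 0 < vnorm h < delta ->
      Rabs (f (vadd x h) - f x - inner (g x) h) <= e * vnorm h.

Fixpoint psum (a : nat -> R) (T : nat) : R :=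
  match T with O => 0 | S n => psum a n + a n end.

Fixpoint minupto (a : nat -> R) (n : nat) : R :=
  match n with O => a O | S m => Rmin (minupto a m) (a (S m)) end.

Definition algorithm1 {X : Hilbert} (f : X -> R) (g : X -> X)
  (x0 : X) (alpha0 beta rho : R)
  (x : nat -> X) (alpha : nat -> R) (d : nat -> X) (l : nat -> nat)
  (nu : nat -> nat -> R) : Prop :=
  0 < alpha0 /\ 0 < beta < 1 /\ 0 < rho < 1 /\
  x O = x0 /\ alpha O = alpha0 /\
  (forall k, inner (g (x k)) (d k) < 0) /\
  (forall k j, 0 <= nu k j) /\
  (forall k,
     f (vadd (x k) (vscal (alpha k * beta ^ l k) (d k)))
       <= f (x k) + rho * (alpha k * beta ^ l k) * inner (g (x k)) (d k) + nu k (l k)) /\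
  (forall k j, (j < l k)%nat ->
     ~ (f (vadd (x k) (vscal (alpha k * beta ^ j) (d k)))
       <= f (x k) + rho * (alpha k * beta ^ j) * inner (g (x k)) (d k) + nu k j)) /\
  (forall k, x (S k) = vadd (x k) (vscal (alpha k * beta ^ l k) (d k))) /\
  (forall k, alpha (S k) = alpha k * powerRZ beta (Z.of_nat (l k) - 1)).

Definition kappa_c (alpha0 beta rho c1 c2 L : R) : R :=
  Rmin (rho * beta * alpha0 * c1) (2 * beta * rho * (1 - rho) * c1 ^ 2 / (L * c2 ^ 2)).

(* Main.v *)
Require Import Defs.
From Stdlib Require Import Reals Lra Lia.
Open Scope R_scope.

Lemma inner_zero_l (X : Hilbert) (h : X) : inner vzero h = 0.
Proof. pose proof (inner_add_l X vzero vzero h) as H. rewrite (vadd_0 X) in H. lra. Qed.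

Lemma inner_zero_r (X : Hilbert) (h : X) : inner h vzero = 0.
Proof. rewrite (inner_sym X). apply inner_zero_l. Qed.

Lemma inner_add_r (X : Hilbert) (u v w : X) : inner w (vadd u v) = inner w u + inner w v.
Proof. rewrite !(inner_sym X w). apply inner_add_l. Qed.

Lemma inner_scal_r (X : Hilbert) a (u v : X) : inner v (vscal a u) = a * inner v u.
Proof. rewrite !(inner_sym X v). apply inner_scal_l. Qed.

Lemma inner_opp_l (X : Hilbert) (u v : X) : inner (vopp u) v = - inner u v.
Proof. pose proof (inner_add_l X u (vopp u) v) as H. rewrite (vadd_opp X), inner_zero_l in H. lra. Qed.

Lemma vsub_add (X : Hilbert) (x w : X) : vsub (vadd x w) x = w.
Proof. unfold vsub. rewrite (vadd_comm X x w), <- (vadd_assoc X), (vadd_opp X), (vadd_0 X). reflexivity. Qed.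

Lemma vadd_split (X : Hilbert) (x h : X) s t :
  vadd x (vscal (s + t) h) = vadd (vadd x (vscal s h)) (vscal t h).
Proof. rewrite (vscal_distr_s X), (vadd_assoc X). reflexivity. Qed.

Lemma inner_scal_scal (X : Hilbert) t (u : X) : inner (vscal t u) (vscal t u) = t * t * inner u u.
Proof. rewrite (inner_scal_l X), inner_scal_r. ring. Qed.

Lemma vnorm_nonneg (X : Hilbert) (u : X) : 0 <= vnorm u.
Proof. apply sqrt_pos. Qed.

Lemma vnorm_sq (X : Hilbert) (u : X) : vnorm u ^ 2 = inner u u.
Proof. unfold vnorm. simpl. rewrite Rmult_1_r. apply sqrt_sqrt. apply inner_pos. Qed.

Lemma vnorm_scal (X : Hilbert) t (u : X) : vnorm (vscal t u) = Rabs t * vnorm u.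
Proof.
  unfold vnorm. rewrite inner_scal_scal, sqrt_mult_alt.
  - f_equal. rewrite <- sqrt_Rsqr_abs. reflexivity.
  - nra.
Qed.

Lemma cauchy_schwarz (X : Hilbert) (u v : X) : inner u v <= vnorm u * vnorm v.
Proof.
  destruct (Req_dec (inner v v) 0) as [H0|H0].
  - apply (inner_def X) in H0. subst v. rewrite inner_zero_r.
    pose proof (vnorm_nonneg X u). pose proof (vnorm_nonneg X vzero). nra.
  - assert (Hvv : 0 < inner v v) by (pose proof (inner_pos X v); lra).
    set (t := inner u v / inner v v).
    pose proof (inner_pos X (vadd u (vscal (- t) v))) as H.
    rewrite (inner_add_l X), !inner_add_r, (inner_scal_l X), !inner_scal_r,
      (inner_scal_l X), (inner_sym X v u) in H.
    assert (Ht : t * inner v v = inner u v) by (unfold t; field; lra).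
    assert (Hk : inner u v * inner u v <= inner u u * inner v v).
    { replace (- t * (- t * inner v v)) with (t * inner u v) in H by (rewrite <- Ht; ring).
      assert (H2 : 0 <= (inner u u - t * inner u v) * inner v v) by (apply Rmult_le_pos; lra).
      replace ((inner u u - t * inner u v) * inner v v) with
        (inner u u * inner v v - inner u v * (t * inner v v)) in H2 by ring.
      rewrite Ht in H2. lra. }
    apply Rle_trans with (Rabs (inner u v)); [apply Rle_abs|].
    unfold vnorm. rewrite <- sqrt_mult_alt by apply inner_pos.
    rewrite <- sqrt_Rsqr_abs. apply sqrt_le_1_alt. unfold Rsqr. exact Hk.
Qed.

Lemma deriv_line (X : Hilbert) (f : X -> R) (g : X -> X) (Hdiff : frechet_gradient f g)
  (x h : X) (Hh : 0 < vnorm h) (s : R) :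
  derivable_pt_lim (fun s => f (vadd x (vscal s h))) s (inner (g (vadd x (vscal s h))) h).
Proof.
  intros eps Heps. set (y := vadd x (vscal s h)). set (N := vnorm h) in *.
  assert (He : eps / (2 * N) > 0) by (apply Rdiv_lt_0_compat; lra).
  destruct (Hdiff y (eps / (2 * N)) He) as [delta [Hd Hf]].
  assert (Hpos : 0 < delta / N) by (apply Rdiv_lt_0_compat; lra).
  exists (mkposreal _ Hpos). intros dl Hdl0 Hdl. simpl in Hdl.
  assert (Ha : 0 < Rabs dl) by (apply Rabs_pos_lt; exact Hdl0).
  rewrite vadd_split. fold y.
  assert (Hn : 0 < vnorm (vscal dl h) < delta).
  { rewrite vnorm_scal. fold N. split. apply Rmult_lt_0_compat; lra.
    apply Rmult_lt_compat_r with (r := N) in Hdl; [|lra].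
    replace (delta / N * N) with delta in Hdl by (field; lra). lra. }
  specialize (Hf _ Hn). rewrite inner_scal_r, vnorm_scal in Hf. fold N in Hf.
  replace ((f (vadd y (vscal dl h)) - f y) / dl - inner (g y) h)
    with ((f (vadd y (vscal dl h)) - f y - dl * inner (g y) h) * / dl) by (field; lra).
  rewrite Rabs_mult, Rabs_inv.
  apply Rle_lt_trans with (eps / (2 * N) * (Rabs dl * N) * / Rabs dl).
  - apply Rmult_le_compat_r; [left; apply Rinv_0_lt_compat; lra| exact Hf].
  - replace (eps / (2 * N) * (Rabs dl * N) * / Rabs dl) with (eps / 2) by (field; lra). lra.
Qed.

Lemma vscal_0 (X : Hilbert) (u : X) : vscal 0 u = vzero.
Proof.
  set (w := vscal 0 u).
  assert (Hw : w = vadd w w) by (unfold w; rewrite <- (vscal_distr_s X); f_equal; ring).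
  rewrite <- (vadd_opp X w).
  transitivity (vadd (vadd w w) (vopp w)); [|now rewrite <- Hw].
  rewrite <- (vadd_assoc X), (vadd_opp X), (vadd_0 X). reflexivity.
Qed.

Lemma descent (X : Hilbert) (f : X -> R) (g : X -> X) (Hdiff : frechet_gradient f g)
  (L : R) (HL : 0 < L)
  (HA1 : forall u v : X, vnorm (vsub (g u) (g v)) <= L * vnorm (vsub u v))
  (x h : X) : f (vadd x h) <= f x + inner (g x) h + L / 2 * inner h h.
Proof.
  destruct (Req_dec (inner h h) 0) as [H0|H0].
  - apply (inner_def X) in H0. subst h. rewrite (vadd_0 X), inner_zero_r, inner_zero_l. lra.
  - assert (HN2 : 0 < inner h h) by (pose proof (inner_pos X h); lra).
    assert (Hh : 0 < vnorm h) by (apply sqrt_lt_R0; exact HN2).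
    set (a := inner (g x) h). set (N2 := inner h h) in *.
    assert (Hd : forall c, 0 <= c <= 1 -> derivable_pt_lim
      (fun s => f (vadd x (vscal s h)) - a * s - L / 2 * N2 * s ^ 2) c
      (inner (g (vadd x (vscal c h))) h - a * 1 - L / 2 * N2 * (INR 2 * c ^ Nat.pred 2))).
    { intros c _.
      apply (derivable_pt_lim_minus (fun s => f (vadd x (vscal s h)) - a * s)
               (fun s => L / 2 * N2 * s ^ 2)).
      - apply (derivable_pt_lim_minus (fun s => f (vadd x (vscal s h))) (fun s => a * s)).
        + apply deriv_line; assumption.
        + exact (derivable_pt_lim_scal id a c 1 (derivable_pt_lim_id c)).
      - exact (derivable_pt_lim_scal (fun y => y ^ 2) (L / 2 * N2) c _ (derivable_pt_lim_pow c 2)). }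
    destruct (MVT_cor2 _ _ 0 1 Rlt_0_1 Hd) as [c [Hc Hc01]].
    rewrite vscal_0, (vadd_0 X), (vscal_1 X) in Hc.
    assert (Hb : inner (g (vadd x (vscal c h))) h - a <= L * c * N2).
    { unfold a, Rminus. rewrite <- (inner_opp_l X), <- (inner_add_l X).
      eapply Rle_trans; [apply cauchy_schwarz|].
      fold (vsub (g (vadd x (vscal c h))) (g x)).
      eapply Rle_trans.
      { apply Rmult_le_compat_r; [apply vnorm_nonneg|apply HA1]. }
      rewrite vsub_add, vnorm_scal, Rabs_right by lra.
      unfold N2. rewrite <- vnorm_sq. simpl. lra. }
    replace (INR 2) with 2 in Hc by (simpl; ring). simpl in Hc. nra.
Qed.

Lemma psum_lower (a : nat -> R) (c : R) (T : nat) :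
  (1 <= T)%nat -> (forall k, (k < T)%nat -> c < a k) -> INR T * c < psum a T.
Proof.
  induction T as [|T IH]; intros H1 Ha; [lia|].
  rewrite S_INR. simpl psum.
  destruct T as [|T'].
  - simpl. specialize (Ha 0%nat ltac:(lia)). lra.
  - assert (IH' := IH ltac:(lia) (fun k Hk => Ha k ltac:(lia))).
    specialize (Ha (S T') ltac:(lia)). lra.
Qed.

Lemma minupto_gt (a : nat -> R) (e : R) (n : nat) :
  (forall k, (k <= n)%nat -> e < a k) -> e < minupto a n.
Proof.
  induction n as [|n IH]; intros H; simpl.
  - apply H; lia.
  - apply Rmin_glb_lt; [apply IH; intros; apply H; lia| apply H; lia].
Qed.

Theorem theorem2 (X : Hilbert) (f : X -> R) (g : X -> X)
  (x0 : X) (alpha0 beta rho : R)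
  (x : nat -> X) (alpha : nat -> R) (d : nat -> X) (l : nat -> nat)
  (nu : nat -> nat -> R)
  (L flow c1 c2 : R)
  (Hdiff : frechet_gradient f g)
  (Halg : algorithm1 f g x0 alpha0 beta rho x alpha d l nu)
  (* A1 *)
  (HL : 0 < L)
  (HA1 : forall u v : X, vnorm (vsub (g u) (g v)) <= L * vnorm (vsub u v))
  (* A2 *)
  (HA2 : forall u : X, flow <= f u)
  (* A3 *)
  (Hc1 : 0 < c1) (Hc2 : 0 < c2)
  (HA3a : forall k, inner (g (x k)) (d k) <= - c1 * vnorm (g (x k)) ^ 2)
  (HA3b : forall k, vnorm (d k) <= c2 * vnorm (g (x k)))
  (* A4 : (1/T) sum_{k<T} nu_k -> 0, indexed by T = n+1 *)
  (HA4 : Un_cv (fun n => psum (fun k => nu k (l k)) (S n) / INR (S n)) 0)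
  (eps : R) (Heps : 0 < eps) (T0 : nat)
  (HT0 : forall T : nat, (T0 <= T)%nat -> (1 <= T)%nat ->
     psum (fun k => nu k (l k)) T / INR T
       <= kappa_c alpha0 beta rho c1 c2 L * eps ^ 2 / 2)
  (T : nat) (HT1 : (1 <= T)%nat) (HTT0 : (T0 <= T)%nat)
  (HT : 2 * (f x0 - flow) / (kappa_c alpha0 beta rho c1 c2 L * eps ^ 2) <= INR T) :
  minupto (fun k => vnorm (g (x k))) (T - 1) <= eps.
Proof.
  destruct Halg as [Ha0 [Hb [Hr [Hx0 [Hal0 [Hdneg [Hnu [Hacc [Hrej [Hxs Has]]]]]]]]]].
  set (b := 2 * (1 - rho) * c1 / (L * c2 ^ 2)).
  assert (HLc : 0 < L * c2 ^ 2) by (apply Rmult_lt_0_compat; [lra|apply pow_lt; lra]).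
  assert (Hbpos : 0 < b).
  { unfold b. apply Rdiv_lt_0_compat; [|exact HLc].
    apply Rmult_lt_0_compat; [|lra]. lra. }
  set (m := Rmin alpha0 b).
  assert (Hm : 0 < m) by (unfold m; apply Rmin_glb_lt; lra).
  set (K := kappa_c alpha0 beta rho c1 c2 L).
  assert (Hrbc : 0 < rho * beta * c1) by (apply Rmult_lt_0_compat; [apply Rmult_lt_0_compat|]; lra).
  assert (HK : K <= rho * beta * c1 * m).
  { assert (K1 : K <= rho * beta * alpha0 * c1) by apply Rmin_l.
    assert (K2 : K <= rho * beta * c1 * b).
    { unfold b. replace (rho * beta * c1 * (2 * (1 - rho) * c1 / (L * c2 ^ 2)))
        with (2 * beta * rho * (1 - rho) * c1 ^ 2 / (L * c2 ^ 2)) by (field; lra).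
      apply Rmin_r. }
    unfold m, Rmin. destruct (Rle_dec alpha0 b); lra. }
  assert (HKpos : 0 < K).
  { unfold K, kappa_c. apply Rmin_glb_lt.
    - apply Rmult_lt_0_compat; [apply Rmult_lt_0_compat; [apply Rmult_lt_0_compat|]|]; lra.
    - apply Rdiv_lt_0_compat; [|exact HLc].
      apply Rmult_lt_0_compat; [|apply pow_lt; lra].
      apply Rmult_lt_0_compat; [apply Rmult_lt_0_compat; [apply Rmult_lt_0_compat|]|]; lra. }
  assert (Hdd : forall k, inner (d k) (d k) <= c2 ^ 2 * vnorm (g (x k)) ^ 2).
  { intro k. rewrite <- vnorm_sq. pose proof (HA3b k). pose proof (vnorm_nonneg X (d k)).
    simpl. nra. }
  assert (Hstep : forall k, m <= alpha k -> beta * m <= alpha k * beta ^ l k).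
  { intros k Hk. destruct (l k) as [|j] eqn:E.
    - simpl. nra.
    - assert (Hj := Hrej k j ltac:(lia)).
      set (s := alpha k * beta ^ j) in *.
      assert (Hs : 0 < s) by (unfold s; apply Rmult_lt_0_compat; [lra|apply pow_lt; lra]).
      pose proof (descent X f g Hdiff L HL HA1 (x k) (vscal s (d k))) as Hdes.
      rewrite inner_scal_r, inner_scal_scal in Hdes.
      set (D := inner (g (x k)) (d k)) in *.
      set (dd := inner (d k) (d k)) in *.
      set (G2 := vnorm (g (x k)) ^ 2) in *.
      assert (HD := Hdneg k). fold D in HD.
      assert (Hnkj := Hnu k j).
      assert (H1 : rho * s * D < s * D + L / 2 * (s * s * dd)) by lra.
      assert (H2 : (1 - rho) * (- D) < L / 2 * s * dd).
      { apply Rmult_lt_reg_l with s; [exact Hs|]. nra. }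
      assert (HG2 : 0 <= G2) by (unfold G2; apply pow2_ge_0).
      assert (Hdd' := Hdd k). fold dd G2 in Hdd'.
      assert (HA := HA3a k). fold D G2 in HA.
      assert (H3 : (1 - rho) * c1 * G2 < L / 2 * s * c2 ^ 2 * G2).
      { assert (L / 2 * s * dd <= L / 2 * s * (c2 ^ 2 * G2)).
        { apply Rmult_le_compat_l; [|exact Hdd']. apply Rmult_le_pos; lra. }
        assert ((1 - rho) * c1 * G2 <= (1 - rho) * (- D)).
        { replace ((1 - rho) * c1 * G2) with ((1 - rho) * (c1 * G2)) by ring.
          apply Rmult_le_compat_l; lra. }
        lra. }
      assert (HG2p : 0 < G2).
      { destruct HG2 as [HG2|HG2]; [exact HG2|]. rewrite <- HG2 in H3. lra. }
      assert (H4 : b < s).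
      { apply Rmult_lt_reg_r with (L * c2 ^ 2); [exact HLc|].
        unfold b. replace (2 * (1 - rho) * c1 / (L * c2 ^ 2) * (L * c2 ^ 2))
          with (2 * ((1 - rho) * c1)) by (field; lra).
        apply Rmult_lt_reg_r with G2; [exact HG2p|]. lra. }
      assert (m <= b) by apply Rmin_r.
      replace (alpha k * beta ^ S j) with (beta * s) by (unfold s; simpl; ring).
      apply Rmult_le_compat_l; lra. }
  assert (Hal : forall k, m <= alpha k).
  { induction k as [|k IH].
    - rewrite Hal0. apply Rmin_l.
    - specialize (Hstep k IH).
      assert (E : alpha k * beta ^ l k = beta * alpha (S k)).
      { rewrite Has, pow_powerRZ.
        replace (Z.of_nat (l k)) with ((Z.of_nat (l k) - 1) + 1)%Z at 1 by ring.
        rewrite powerRZ_add by lra. simpl. ring. }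
      rewrite E in Hstep. apply Rmult_le_reg_l with beta; lra. }
  set (G2 := fun k => vnorm (g (x k)) ^ 2).
  set (nv := fun k => nu k (l k)).
  assert (Hdec : forall k, f (x (S k)) <= f (x k) - K * G2 k + nv k).
  { intro k. rewrite Hxs. eapply Rle_trans; [apply Hacc|].
    assert (Ht := Hstep k (Hal k)).
    assert (HA := HA3a k).
    assert (HG : 0 <= G2 k) by (unfold G2; apply pow2_ge_0).
    assert (Hbm : 0 < beta * m) by (apply Rmult_lt_0_compat; lra).
    unfold G2, nv in *. cbv beta in *.
    set (t := alpha k * beta ^ l k) in *.
    set (GG := vnorm (g (x k)) ^ 2) in *.
    assert (rho * t * inner (g (x k)) (d k) <= rho * t * (- c1 * GG)).
    { apply Rmult_le_compat_l; [|exact HA]. apply Rmult_le_pos; lra. }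
    assert (rho * c1 * GG * (beta * m) <= rho * c1 * GG * t).
    { apply Rmult_le_compat_l; [|exact Ht]. apply Rmult_le_pos; [apply Rmult_le_pos|]; lra. }
    assert (K * GG <= rho * beta * c1 * m * GG) by (apply Rmult_le_compat_r; lra).
    lra. }
  assert (Hsum : forall n, f (x n) <= f x0 - K * psum G2 n + psum nv n).
  { induction n as [|n IH].
    - simpl. rewrite Hx0. lra.
    - simpl psum. specialize (Hdec n). lra. }
  apply Rnot_lt_le. intro Hlt.
  assert (Hgt : INR T * eps ^ 2 < psum G2 T).
  { apply psum_lower; [exact HT1|]. intros k Hk.
    assert (Hk' : eps < vnorm (g (x k))).
    { eapply Rlt_le_trans; [exact Hlt|].
      clear -Hk. remember (fun k => vnorm (g (x k))) as a.
      replace (vnorm (g (x k))) with (a k) by (subst; reflexivity).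
      assert (Hk2 : (k <= T - 1)%nat) by lia. generalize (T - 1)%nat Hk2. clear.
      induction n; intros Hk; simpl.
      - replace k with 0%nat by lia. lra.
      - destruct (Nat.eq_dec k (S n)) as [->|Hne]; [apply Rmin_r|].
        eapply Rle_trans; [apply Rmin_l|]. apply IHn. lia. }
    unfold G2. simpl. nra. }
  assert (HTpos : 0 < INR T) by (apply lt_0_INR; lia).
  assert (Hnv : psum nv T <= INR T * (K * eps ^ 2 / 2)).
  { specialize (HT0 T HTT0 HT1). fold nv K in HT0.
    apply Rmult_le_reg_r with (/ INR T); [apply Rinv_0_lt_compat; lra|].
    replace (INR T * (K * eps ^ 2 / 2) * / INR T) with (K * eps ^ 2 / 2) by (field; lra).
    exact HT0. }
  assert (HfT := Hsum T). assert (Hfl := HA2 (x T)).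
  assert (HKe : 0 < K * eps ^ 2) by (apply Rmult_lt_0_compat; [lra|apply pow_lt; lra]).
  fold K in HT.
  assert (HT' : 2 * (f x0 - flow) <= INR T * (K * eps ^ 2)).
  { apply Rmult_le_reg_r with (/ (K * eps ^ 2)); [apply Rinv_0_lt_compat; lra|].
    replace (INR T * (K * eps ^ 2) * / (K * eps ^ 2)) with (INR T) by (field; lra).
    exact HT. }
  assert (K * (INR T * eps ^ 2) < K * psum G2 T) by (apply Rmult_lt_compat_l; lra).
  nra.
Qed.
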